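(* Let $\mathcal{A}\subset\mathcal{B}\subset\mathcal{N}$ with $\mathcal{A}$ a $\gamma$-ensemble ($|\mathcal{A}|/N\ge\gamma$), and let $\Theta$ be a solution of the Kuramoto model with $D(\Theta_\mathcal{A}(t_0))<2\pi$. Then $$\left.\frac{d}{dt}\right|^+_{t=t_0}D(\Theta_\mathcal{A})\le D(\Omega_\mathcal{B})-2\kappa\sin\frac{D(\Theta_\mathcal{A}(t_0))}{2}\left(\gamma\cos\frac{D(\Theta_\mathcal{A}(t_0))}{2}-(1-\gamma)\right),$$ where $\frac{d}{dt}\big|^+$ is the upper Dini derivative.
   Context: Kuramoto model: for $N\ge2$, $\Omega=(\nu_1,\dots,\nu_N)\in\mathbb{R}^N$, $\kappa\ge0$, $\Theta(t)\in\mathbb{R}^N$ solves $\dot\theta_i=\nu_i+\frac{\kappa}{N}\sum_j\sin(\theta_j-\theta_i)$. $\mathcal{N}=\{1,\dots,N\}$; for $\mathcal{A}\subset\mathcal{N}$, $D(\Theta_\mathcal{A})=\max_{i,j\in\mathcal{A}}|\theta_i-\theta_j|$, $D(\Omega_\mathcal{A})=\max_{i,j\in\mathcal{A}}|\nu_i-\nu_j|$; $\gamma\in(1/2,1]$. *)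

(* Defs.v *)
From HB Require Import structures.
From mathcomp Require Import all_boot all_order all_algebra.
From mathcomp Require Import all_classical all_reals all_analysis.
Set Implicit Arguments. Unset Strict Implicit. Unset Printing Implicit Defensive.
Import Order.TTheory GRing.Theory Num.Theory.
Import numFieldNormedType.Exports.
Local Open Scope classical_set_scope.
Local Open Scope ring_scope.

Definition diam (R : realType) (N : nat) (A : {set 'I_N}) (x : 'I_N -> R) : R :=
  \big[Num.max/0]_(i in A) \big[Num.max/0]_(j in A) `|x i - x j|.

Definition kuramoto_rhs (R : realType) (N : nat) (nu : 'I_N -> R) (kappa : R)
  (th : 'I_N -> R) (i : 'I_N) : R :=
  nu i + kappa / N%:R * \sum_(j < N) sin (th j - th i).

Definition kuramoto_solution (R : realType) (N : nat) (nu : 'I_N -> R) (kappa : R)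
  (Theta : R -> 'I_N -> R) : Prop :=
  forall (i : 'I_N) (t : R),
    is_derive t (1 : R) (fun s => Theta s i) (kuramoto_rhs nu kappa (Theta t) i).

Definition upper_dini (R : realType) (f : R -> R) (t0 : R) : \bar R :=
  limf_esup (fun h : R => ((f (t0 + h) - f t0) / h)%:E) (0%R)^'+.

(* Main.v *)
Require Import Defs.
From HB Require Import structures.
From mathcomp Require Import all_boot all_order all_algebra.
From mathcomp Require Import all_classical all_reals all_analysis.
From mathcomp Require Import lra.
From mathcomp Require Import ring.
Import Order.TTheory GRing.Theory Num.Theory.
Import numFieldNormedType.Exports.
Local Open Scope classical_set_scope.
Local Open Scope ring_scope.
Lemma near_dr (R : realType) (Q : R -> Prop) :
  (\forall h \near (0:R)^', Q h) -> \forall h \near (0:R)^'+, Q h.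
Proof.
rewrite /prop_near1 /dnbhs /at_right /within /=.
move=> H; have := @filterS R (nbhs (0:R)) _ (fun x => x != 0 -> Q x) (fun x => 0 < x -> Q x) _ H; apply. by move=> x Hx x0; apply: Hx; rewrite gt_eqF.
Qed.

Arguments near_dr {R Q}.

Lemma quot_cvg (R : realType) (g : R -> R) (t0 dg : R) :
  is_derive t0 1 g dg ->
  (fun h => h^-1 * (g (t0 + h) - g t0)) @ (0:R)^' --> dg.
Proof.
move=> [ex dv]; rewrite -dv.
have := ex; rewrite /derivable => Hc.
apply: cvg_trans Hc; apply: near_eq_cvg; near=> h.
rewrite /= /shift /=. by rewrite [h%:A]mulr1 (addrC h).
Unshelve. all: by end_near. Qed.

Lemma dini_max (R : realType) (I : finType) (P : pred I) (g : I -> R -> R)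
  (dg : I -> R) (F : R -> R) (t0 c : R) :
  (forall i, P i -> is_derive t0 1 (g i) (dg i)) ->
  (forall i, P i -> g i t0 <= F t0) ->
  (forall i, P i -> g i t0 = F t0 -> dg i <= c) ->
  (forall t b, (forall i, P i -> g i t <= b) -> F t <= b) ->
  (upper_dini F t0 <= c%:E)%E.
Proof.
move=> Hd Hle Hact Hub.
apply/lee_addgt0Pr => e e0.
set ce := c + e.
have H : \forall h \near (0:R)^'+, forall i, P i -> g i (t0 + h) <= F t0 + h * ce.
  apply: filter_forall => i.
  case: (boolP (P i)) => Pi; last first.
    by apply: nearW => h.
  have q := @quot_cvg _ _ _ _ (Hd i Pi).
  have [Heq|Hlt] : g i t0 = F t0 \/ g i t0 < F t0.
    by move: (Hle i Pi); rewrite le_eqVlt => /orP[/eqP|]; auto.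
  - have dlt : dg i < ce.
      by apply: (le_lt_trans (Hact i Pi Heq)); rewrite /ce ltrDl.
    have L : \forall t \near (0:R)^', t^-1 * (g i (t0 + t) - g i t0) < ce by exact: cvgr_lt _ q _ dlt.
    near=> h.
    have h0 : 0 < h by near: h; exact: nbhs_right_gt.
    have Lh : h^-1 * (g i (t0 + h) - g i t0) < ce. by near: h; exact: (near_dr L).
    move=> _.
    set qq := h^-1 * _ in Lh.
    have E : g i (t0 + h) - g i t0 = h * qq by rewrite /qq mulrA mulfV ?gt_eqF // mul1r.
    have : 0 < h * (ce - qq) by apply: mulr_gt0 => //; rewrite subr_gt0.
    rewrite mulrBr; lra.
  - have q2 : (fun h => h * (h^-1 * (g i (t0 + h) - g i t0) - ce)) @ (0:R)^' --> 0 * (dg i - ce).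
      apply: cvgM; first exact: cvg_within.
      apply: cvgB => //; exact: cvg_cst.
    have L : \forall t \near (0:R)^', t * (t^-1 * (g i (t0 + t) - g i t0) - ce) < F t0 - g i t0.
      by apply: (cvgr_lt _ q2); rewrite mul0r subr_gt0.
    near=> h.
    have h0 : 0 < h by near: h; exact: nbhs_right_gt.
    have Lh : h * (h^-1 * (g i (t0 + h) - g i t0) - ce) < F t0 - g i t0.
      by near: h; exact: (near_dr L).
    move=> _.
    set qq := h^-1 * _ in Lh.
    have E : g i (t0 + h) - g i t0 = h * qq by rewrite /qq mulrA mulfV ?gt_eqF // mul1r.
    move: Lh; rewrite mulrBr; lra.
have H2 : \forall h \near (0:R)^'+, (F (t0 + h) - F t0) / h <= ce.
  near=> h.
  have h0 : 0 < h by near: h; exact: nbhs_right_gt.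
  have Hh : forall i, P i -> g i (t0 + h) <= F t0 + h * ce by near: h; exact: H.
  rewrite ler_pdivrMr //.
  have := Hub (t0 + h) _ Hh; lra.
rewrite -EFinD /upper_dini limf_esupE.
set V := [set h | (F (t0 + h) - F t0) / h <= ce].
apply: (le_trans (@ereal_inf_lbound _ _ (ereal_sup ((fun h => ((F (t0 + h) - F t0) / h)%:E) @` V)) _)).
  by exists V.
apply: ge_ereal_sup => _ [h Vh <-]; rewrite lee_fin; exact: Vh.
Unshelve. all: by end_near. Qed.

Lemma diam_ge (R : realType) (N : nat) (A : {set 'I_N}) (x : 'I_N -> R) i j :
  i \in A -> j \in A -> `|x i - x j| <= diam A x.
Proof.
move=> Ai Aj; rewrite /diam.
apply: le_trans (le_bigmax_cond _ _ Ai).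
exact: (le_bigmax_cond _ (fun j => `|x i - x j|) Aj).
Qed.

Arguments diam_ge {R N A} x {i j}.

Lemma diam_le (R : realType) (N : nat) (A : {set 'I_N}) (x : 'I_N -> R) b :
  0 <= b -> (forall i j, i \in A -> j \in A -> x i - x j <= b) -> diam A x <= b.
Proof.
move=> b0 H; rewrite /diam; apply: bigmax_le => // i Ai.
apply: bigmax_le => // j Aj; rewrite ler_norml.
have := H i j Ai Aj; have := H j i Aj Ai; lra.
Qed.

Arguments diam_le {R N A x b}.

Lemma cos_le (R : realType) (d m : R) : 0 <= d <= pi -> - d <= m <= d -> cos d <= cos m.
Proof.
move=> /andP[d0 dpi] /andP[m1 m2].
rewrite -[cos m]cos_norm.
have hm : `|m| <= d by rewrite ler_norml m1 m2.
move: hm; rewrite le_eqVlt => /orP[/eqP -> //|hlt].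
apply/ltW; rewrite ltr_cos //; rewrite in_itv /=; apply/andP; split => //.
  exact: le_trans (ltW hlt) dpi.
Qed.

Lemma key (R : realType) (N : nat) (nu : 'I_N -> R) (kappa gamma : R)
  (A B : {set 'I_N}) (th : 'I_N -> R) (i j : 'I_N) :
  (0 < N)%N -> 0 <= kappa -> A \subset B ->
  gamma <= #|A|%:R / N%:R -> i \in A -> j \in A ->
  th i - th j = diam A th -> diam A th < 2 * pi ->
  kuramoto_rhs nu kappa th i - kuramoto_rhs nu kappa th j <=
  diam B nu - 2 * kappa * sin (diam A th / 2)
         * (gamma * cos (diam A th / 2) - (1 - gamma)).
Proof.
move=> N0 k0 AB gA Ai Aj Heq Dlt.
set D := diam A th in Heq Dlt *.
set d := D / 2.
have D0 : 0 <= D by have := diam_ge th Ai Ai; rewrite subrr normr0.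
have s0 : 0 <= sin d by apply: sin_ge0_pi; rewrite /d; apply/andP; split; lra.
set s := sin d in s0 *; set co := cos d.
have term : forall k, sin (th k - th i) - sin (th k - th j)
    = -2 * cos (th k - (th i + th j) / 2) * s.
  move=> k; set m := th k - (th i + th j) / 2.
  have -> : th k - th i = m - d by rewrite /m /d -Heq; field.
  have -> : th k - th j = m + d by rewrite /m /d -Heq; field.
  rewrite sinB sinD /s; ring.
have tb : forall k, sin (th k - th i) - sin (th k - th j)
    <= 2 * s + (if k \in A then -2 * s * (co + 1) else 0).
  move=> k; rewrite term; set m := th k - (th i + th j) / 2.
  case: ifP => kA.
  - have h1 := diam_ge th Ai kA; have h2 := diam_ge th kA Aj.
    rewrite -/D in h1 h2.
    have hd : 0 <= d <= pi by rewrite /d; apply/andP; split; lra.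
    have hm : - d <= m <= d.
      rewrite /d /m; move: h1 h2; rewrite !ler_norml => /andP[h1 h1'] /andP[h2 h2'].
      apply/andP; split; lra.
    have hc : co <= cos m by apply: cos_le.
    have : 0 <= (cos m - co) * s by apply: mulr_ge0 => //; rewrite subr_ge0.
    lra.
  - have : 0 <= (cos m + 1) * s by apply: mulr_ge0 => //; have := cos_geN1 m; lra.
    lra.
have Hs : \sum_(k < N) (sin (th k - th i) - sin (th k - th j))
    <= N%:R * (2 * s) + #|A|%:R * (-2 * s * (co + 1)).
  apply: le_trans (ler_sum _ (fun k _ => tb k)) _.
  rewrite big_split /= sumr_const card_ord -big_mkcond /= sumr_const.
  by rewrite !mulr_natl.
have nuB : nu i - nu j <= diam B nu.
  have := diam_ge nu (fintype.subsetP AB _ Ai) (fintype.subsetP AB _ Aj).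
  by apply: le_trans; apply: ler_norm.
have Nr : 0 < N%:R :> R by rewrite ltr0n.
rewrite /kuramoto_rhs.
have -> : nu i + kappa / N%:R * \sum_(j0 < N) sin (th j0 - th i) -
  (nu j + kappa / N%:R * \sum_(j0 < N) sin (th j0 - th j)) =
  nu i - nu j + kappa / N%:R * \sum_(k < N) (sin (th k - th i) - sin (th k - th j)).
  by rewrite sumrB; ring.
have kN : 0 <= kappa / N%:R by rewrite divr_ge0 // ltW.
have H1 := ler_wpM2l kN Hs.
set a := #|A|%:R / N%:R in gA.
have E : kappa / N%:R * (N%:R * (2 * s) + #|A|%:R * (-2 * s * (co + 1)))
   = kappa * (2 * s) - 2 * (kappa * s * (co + 1)) * a.
  rewrite /a; field; rewrite gt_eqF //.
rewrite E in H1.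
have P0 : 0 <= kappa * s * (co + 1).
  by apply: mulr_ge0; [apply: mulr_ge0|]; have := cos_geN1 d; rewrite /co; lra.
have : 0 <= (kappa * s * (co + 1)) * (a - gamma) by apply: mulr_ge0 => //; rewrite subr_ge0.
rewrite -/co -/s.
lra.
Qed.

Theorem lemma4p1 (R : realType) (N : nat) (nu : 'I_N -> R) (kappa gamma : R)
  (A B : {set 'I_N}) (Theta : R -> 'I_N -> R) (t0 : R) :
  (2 <= N)%N ->
  0 <= kappa ->
  1 / 2 < gamma -> gamma <= 1 ->
  A \subset B ->
  gamma <= #|A|%:R / N%:R ->
  kuramoto_solution nu kappa Theta ->
  diam A (Theta t0) < 2 * pi ->
  (upper_dini (fun t => diam A (Theta t)) t0 <=
    (diam B nu
     - 2 * kappa * sin (diam A (Theta t0) / 2)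
         * (gamma * cos (diam A (Theta t0) / 2) - (1 - gamma)))%:E)%E.
Proof.
move=> N2 k0 g1 g2 AB gA sol Dlt.
have N0 : (0 < N)%N by apply: leq_trans N2.
have A0 : (0 < #|A|)%N.
  rewrite lt0n; apply/negP => /eqP HA; rewrite HA mul0r in gA; lra.
have /card_gt0P [a0 a0A] := A0.
apply: (@dini_max R _ (fun p : 'I_N * 'I_N => (p.1 \in A) && (p.2 \in A))
  (fun p t => Theta t p.1 - Theta t p.2)
  (fun p => kuramoto_rhs nu kappa (Theta t0) p.1 - kuramoto_rhs nu kappa (Theta t0) p.2)).
- move=> p _ /=.
  have h1 := sol p.1 t0; have h2 := sol p.2 t0.
  exact: is_deriveB.
- move=> [i j] /andP[Ai Aj] /=.
  have := diam_ge (Theta t0) Ai Aj; have := ler_norm (Theta t0 i - Theta t0 j); lra.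
- move=> [i j] /andP[Ai Aj] /= Heq.
  exact: key.
- move=> t b Hb /=.
  apply: diam_le.
    by have := Hb (a0, a0); rewrite /= a0A subrr; apply.
  by move=> i j Ai Aj; apply: (Hb (i, j)); rewrite /= Ai Aj.
Qed.
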